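(* Let $k$ be a positive integer and let $a/b$ be a vertex of $\mathcal F_k$ with $|a|+|b|>k$. Then every neighbor $x/y$ of $a/b$ in $\mathcal F_k$ is comparable to $a/b$, i.e. $a/b\prec x/y$ or $x/y\prec a/b$.
   Context: The vertex set $V$ consists of all reduced fractions $p/q$ with $p,q\in\mathbb Z$, $\gcd(p,q)=1$, together with $1/0$; here $p/q$ and $(-p)/(-q)$ denote the same vertex. For vertices define $d(p/q,a/b)=|pb-qa|$. The graph $\mathcal F_k$ has vertex set $V$, with an edge between $p/q$ and $a/b$ exactly when $d(p/q,a/b)=k$. Write $a/b\prec p/q$ when $a/b$ and $p/q$ are adjacent in $\mathcal F_k$ and $|a|\le|p|$ and $|b|\le|q|$. *)

(* Defs.v *)
From Stdlib Require Import ZArith.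
Open Scope Z_scope.

(* A vertex p/q of F_k is represented by a pair (p, q) of integers with
   gcd(p,q) = 1 (this includes 1/0 and excludes 0/0).  The identification
   p/q = (-p)/(-q) is harmless: every notion below (d, adjacency, |.|)
   is invariant under simultaneous sign change. *)
Definition is_vertex (p q : Z) : Prop := Z.gcd p q = 1.

Definition dist (p q a b : Z) : Z := Z.abs (p * b - q * a).

Definition adjacent (k p q a b : Z) : Prop := dist p q a b = k.

Definition prec (k a b p q : Z) : Prop :=
  adjacent k a b p q /\ Z.abs a <= Z.abs p /\ Z.abs b <= Z.abs q.

(* Main.v *)
Require Import Defs.
From Stdlib Require Import ZArith Lia.
Open Scope Z_scope.

Lemma tri (u v : Z) : Z.abs (u - v) >= Z.abs u - Z.abs v.
Proof.
  pose proof (Z.abs_triangle (u - v) v).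
  replace (u - v + v) with u in H by ring. lia.
Qed.

Lemma core (k A B X Y D : Z) :
  0 <= A -> 0 <= B -> 0 <= X -> 0 <= Y ->
  A + B > k -> D = k ->
  D >= B * X - A * Y -> D >= A * Y - B * X ->
  (A <= X /\ B <= Y) \/ (X <= A /\ Y <= B).
Proof.
  intros HA HB HX HY Hs HD T1 T2.
  destruct (Z.le_gt_cases A X) as [G1|G1];
  destruct (Z.le_gt_cases B Y) as [G2|G2].
  - left; lia.
  - destruct (Z.le_gt_cases X A) as [G3|G3].
    + right; lia.
    + exfalso.
      assert (0 <= (X - A - 1) * B) by (apply Z.mul_nonneg_nonneg; lia).
      assert (0 <= (B - Y - 1) * A) by (apply Z.mul_nonneg_nonneg; lia).
      lia.
  - destruct (Z.le_gt_cases Y B) as [G3|G3].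
    + right; lia.
    + exfalso.
      assert (0 <= (A - X - 1) * B) by (apply Z.mul_nonneg_nonneg; lia).
      assert (0 <= (Y - B - 1) * A) by (apply Z.mul_nonneg_nonneg; lia).
      lia.
  - right; lia.
Qed.

Theorem lemma4p5 (k a b x y : Z) :
  0 < k ->
  is_vertex a b -> is_vertex x y ->
  Z.abs a + Z.abs b > k ->
  adjacent k a b x y ->
  prec k a b x y \/ prec k x y a b.
Proof.
  intros Hk _ _ Hs Hadj.
  unfold prec, adjacent, dist in *.
  assert (E : Z.abs (x * b - y * a) = Z.abs (a * y - b * x)).
  { rewrite <- Z.abs_opp. f_equal. ring. }
  rewrite E.
  assert (T1 : Z.abs (a * y - b * x) >= Z.abs b * Z.abs x - Z.abs a * Z.abs y).
  { rewrite <- E, <- !Z.abs_mul, (Z.mul_comm b x), (Z.mul_comm a y). apply tri. }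
  assert (T2 : Z.abs (a * y - b * x) >= Z.abs a * Z.abs y - Z.abs b * Z.abs x).
  { rewrite <- !Z.abs_mul. apply tri. }
  destruct (core k (Z.abs a) (Z.abs b) (Z.abs x) (Z.abs y) (Z.abs (a * y - b * x))
    (Z.abs_nonneg a) (Z.abs_nonneg b) (Z.abs_nonneg x) (Z.abs_nonneg y) Hs Hadj T1 T2)
    as [[? ?]|[? ?]].
  - left; auto.
  - right; auto.
Qed.
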